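(* Let $(G;+)$ be a finite abelian group, $n\ge3$, and $\rho=\{(a_1,\dots,a_n)\in G^n:\ a_1+\dots+a_n=0\}$. Suppose $\rho$ is preserved by a WNU vector-function $(f_1,\dots,f_n)$ of arity $m$. Then for every $j\in\{1,\dots,n\}$ there is a positive integer $t$ with $f_j(x_1,\dots,x_m)=t\cdot x_1+\dots+t\cdot x_m$ for all $x_1,\dots,x_m\in G$.
   Context: A WNU is an $m$-ary ($m\ge2$) operation $f$ with $f(x,\dots,x)=x$ and $f(y,x,\dots,x)=f(x,y,x,\dots,x)=\dots=f(x,\dots,x,y)$. A WNU vector-function of arity $m$ is a tuple $(f_1,\dots,f_n)$ of $m$-ary WNUs on $G$; it preserves $\rho\subseteq G^n$ if for all $\alpha^1,\dots,\alpha^m\in\rho$ the tuple $(f_1(\alpha^1(1),\dots,\alpha^m(1)),\dots,f_n(\alpha^1(n),\dots,\alpha^m(n)))\in\rho$. $t\cdot x$ denotes $x+\dots+x$ ($t$ times). *)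

(* Defs.v *)
From HB Require Import structures.
From mathcomp Require Import all_boot all_order all_algebra.
Set Implicit Arguments. Unset Strict Implicit. Unset Printing Implicit Defensive.
Import GRing.Theory.
Local Open Scope ring_scope.

Definition op_on (G : Type) (m : nat) := ('I_m -> G) -> G.

Definition one_diff (G : Type) (m : nat) (x y : G) (i : 'I_m) : 'I_m -> G :=
  fun k => if k == i then y else x.

Definition is_WNU (G : Type) (m : nat) (f : op_on G m) : Prop :=
  (forall x : G, f (fun _ => x) = x) /\
  (forall (x y : G) (i k : 'I_m), f (one_diff x y i) = f (one_diff x y k)).

Definition sum_zero_rel (G : zmodType) (n : nat) (a : 'I_n -> G) : Prop :=
  \sum_(j < n) a j = 0.

Definition vec_preserves (G : Type) (n m : nat) (f : 'I_n -> op_on G m)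
    (rho : ('I_n -> G) -> Prop) : Prop :=
  forall alpha : 'I_m -> ('I_n -> G),
    (forall k, rho (alpha k)) ->
    rho (fun j => f j (fun k => alpha k j)).

(* Main.v *)
Require Import Defs.
From HB Require Import structures.
From mathcomp Require Import all_boot all_order all_algebra.
From Stdlib Require Import FunctionalExtensionality.
Import GRing.Theory.
Local Open Scope ring_scope.

Lemma three_idx (n : nat) (j : 'I_n) : (3 <= n)%N ->
  exists j1 j2 : 'I_n, [/\ j1 != j, j2 != j & j1 != j2].
Proof.
move=> n3.
have o0 : (0 < n)%N by apply: leq_trans n3.
have o1 : (1 < n)%N by apply: leq_trans n3.
have o2 : (2 < n)%N by [].
case: (eqVneq (val j) 0%N) => [j0|j0].
  exists (Ordinal o1), (Ordinal o2); split; by rewrite -val_eqE /= ?j0.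
case: (eqVneq (val j) 1%N) => [j1|j1].
  exists (Ordinal o0), (Ordinal o2); split; by rewrite -val_eqE /= ?j1.
exists (Ordinal o0), (Ordinal o1); split; rewrite -val_eqE /= //; rewrite eq_sym //.
Qed.

Section S.
Variables (G : zmodType) (n m : nat) (f : 'I_n -> op_on G m).
Hypothesis WNU : forall j, is_WNU (f j).
Hypothesis pres : vec_preserves f (@sum_zero_rel G n).

Lemma f0 l : f l (fun _ => 0) = 0.
Proof. by case: (WNU l). Qed.

Lemma three (a b c : 'I_n) (hab : a != b) (hac : a != c) (hbc : b != c)
  (x y z : 'I_m -> G) (hz : forall k, x k + y k + z k = 0) :
  f a x + f b y + f c z = 0.
Proof.
pose col l := if l == a then x else if l == b then y else if l == c then z
              else (fun _ => 0).
have := pres (fun k l => col l k).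
rewrite /sum_zero_rel.
have hba : b != a by rewrite eq_sym.
have hca : c != a by rewrite eq_sym.
have hcb : c != b by rewrite eq_sym.
rewrite (bigD1 a) //= (bigD1 b) ?hba //= (bigD1 c) ?hca ?hcb //=.
rewrite big1; last first.
  move=> l /andP[/andP[la lb] lc].
  by rewrite /col (negbTE la) (negbTE lb) (negbTE lc) f0.
rewrite /col eqxx (negbTE hba) eqxx (negbTE hca) (negbTE hcb) eqxx addr0 addrA.
apply=> k.
rewrite (bigD1 a) //= (bigD1 b) ?hba //= (bigD1 c) ?hca ?hcb //=.
rewrite big1; last first.
  move=> l /andP[/andP[la lb] lc].
  by rewrite /col (negbTE la) (negbTE lb) (negbTE lc).
by rewrite /col eqxx (negbTE hba) eqxx (negbTE hca) (negbTE hcb) eqxx addr0 addrA.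
Qed.

Lemma additive j : (3 <= n)%N -> forall x y : 'I_m -> G,
  f j (fun k => x k + y k) = f j x + f j y.
Proof.
move=> n3 x y.
have [j1 [j2 [h1 h2 h12]]] := @three_idx n j n3.
have hj1 : j != j1 by rewrite eq_sym.
have hj2 : j != j2 by rewrite eq_sym.
have A := three _ _ _ hj1 hj2 h12 (fun k => x k + y k) (fun _ => 0)
   (fun k => - (x k + y k)) (fun k => ltac:(by rewrite addr0 subrr)).
have B := three _ _ _ hj1 hj2 h12 (x) (fun _ => 0)
   (fun k => - x k) (fun k => ltac:(by rewrite addr0 subrr)).
have B' := three _ _ _ hj1 hj2 h12 (y) (fun _ => 0)
   (fun k => - y k) (fun k => ltac:(by rewrite addr0 subrr)).
have C := three _ _ _ hj1 hj2 h12 (fun _ => 0) (y)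
   (fun k => - y k) (fun k => ltac:(by rewrite add0r subrr)).
have D := three _ _ _ hj1 hj2 h12 (x) (y)
   (fun k => - (x k + y k)) (fun k => ltac:(by rewrite subrr)).
rewrite f0 addr0 in A; rewrite f0 addr0 in B; rewrite f0 addr0 in B'.
rewrite f0 add0r in C.
move/eqP: A; rewrite addr_eq0 => /eqP ->.
move/eqP: B; rewrite addr_eq0 => /eqP B.
move/eqP: B'; rewrite addr_eq0 => /eqP ->.
move/eqP: C; rewrite addr_eq0 => /eqP <-.
move/eqP: D; rewrite -addrA addr_eq0 => /eqP E.
by rewrite E opprD addrAC addNr add0r.
Qed.

Lemma decomp j (n3 : (3 <= n)%N) (x : 'I_m -> G) :
  f j x = \sum_(i < m) f j (one_diff 0 (x i) i).
Proof.
have sumF : forall s : seq 'I_m,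
    f j (fun k => \sum_(i <- s) one_diff 0 (x i) i k)
    = \sum_(i <- s) f j (one_diff 0 (x i) i).
  elim=> [|a s IH].
    have -> : (fun k => \sum_(i <- [::]) one_diff 0 (x i) i k) = fun _ => 0.
      by apply: functional_extensionality => k; rewrite big_nil.
    by rewrite f0 big_nil.
  have -> : (fun k => \sum_(i <- a :: s) one_diff 0 (x i) i k)
     = fun k => one_diff 0 (x a) a k + \sum_(i <- s) one_diff 0 (x i) i k.
    by apply: functional_extensionality => k; rewrite big_cons.
  by rewrite additive // IH big_cons.
rewrite -sumF; congr (f j _).
apply: functional_extensionality => k.
rewrite (bigD1 k) //= /one_diff eqxx big1 ?addr0 // => i.
by rewrite eq_sym => /negbTE ->.
Qed.

End S.
Lemma key (G : zmodType) (m : nat) (h : G -> G)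
  (hadd : forall a b, h (a + b) = h a + h b) (hm : forall a, h a *+ m = a)
  (m1 : (1 <= m)%N) (a b : nat) (ab : (a < b)%N)
  (E : forall x : G, x *+ (m ^ a) = x *+ (m ^ b)) :
  exists t : nat, (0 < t)%N /\ forall x, h x = x *+ t.
Proof.
have h0 : h 0 = 0.
  have := hadd 0 0; rewrite addr0 => H.
  by apply: (@addrI _ (h 0)); rewrite addr0 -H.
have hn : forall c x, h (x *+ c) = h x *+ c.
  elim=> [|c IH] x; first by rewrite !mulr0n.
  by rewrite !mulrS hadd IH.
have hinv : forall a x, iter a h (x *+ m ^ a) = x.
  elim=> [|k IH] x; first by rewrite expn0 mulr1n.
  by rewrite iterS expnS mulrnA IH hn hm.
have [d def_b] : exists d, b = (a + d.+1)%N.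
  exists (b - a).-1; rewrite prednK ?subn_gt0 // subnKC //; exact: ltnW.
have Ed : forall x : G, x *+ m ^ d.+1 = x.
  move=> x; rewrite -{2}(hinv a x) E def_b expnD mulnC mulrnA hinv //.
exists (m ^ d)%N; split; first by rewrite expn_gt0 m1.
move=> x; rewrite -{1}(Ed x) hn expnS mulrnA hm //.
Qed.

Theorem mainTheorem15 (G : finZmodType) (n m : nat) (f : 'I_n -> op_on G m) :
  (3 <= n)%N -> (2 <= m)%N ->
  (forall j, is_WNU (f j)) ->
  vec_preserves f (@sum_zero_rel G n) ->
  forall j : 'I_n, exists t : nat, (0 < t)%N /\
    forall x : 'I_m -> G, f j x = \sum_(i < m) (x i *+ t).
Proof.
move=> n3 m2 WNU pres j.
have m0 : (0 < m)%N by apply: leq_trans m2.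
pose i0 := Ordinal m0.
pose h a := f j (one_diff 0 a i0).
have hW : forall a i, f j (one_diff 0 a i) = h a.
  by move=> a i; case: (WNU j) => _ /(_ 0 a i i0).
have hadd : forall a b, h (a + b) = h a + h b.
  move=> a b; rewrite /h -additive //.
  congr (f j _); apply: functional_extensionality => k.
  by rewrite /one_diff; case: ifP; rewrite ?addr0.
have hdec : forall x, f j x = \sum_(i < m) h (x i).
  by move=> x; rewrite (@decomp G n m f WNU pres) //; apply: eq_bigr => i _; rewrite hW.
have hm : forall a, h a *+ m = a.
  move=> a; case: (WNU j) => /(_ a) E _.
  by rewrite -{2}E hdec sumr_const card_ord.
pose T := {ffun G -> G}.
pose s (i : 'I_(#|T|.+1)) : T := [ffun x => x *+ (m ^ i)].
have : ~~ injectiveb s.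
  apply/negP => /injectiveP inj; have := leq_card _ inj.
  by rewrite card_ord ltnn.
case/injectivePn => i [i' ne eq].
have Ex : forall x : G, x *+ (m ^ i) = x *+ (m ^ i').
  by move=> x; have := congr1 (fun g : T => g x) eq; rewrite /s !ffunE.
have [t [t0 ht]] : exists t : nat, (0 < t)%N /\ forall x, h x = x *+ t.
  case: (ltngtP i i') => [lt|lt|e]; last by move: ne; rewrite -val_eqE /= e eqxx.
    exact: (@key _ _ _ hadd hm m0 _ _ lt Ex).
  by apply: (@key _ _ _ hadd hm m0 _ _ lt) => x; rewrite Ex.
exists t; split => // x; rewrite hdec; apply: eq_bigr => k _; exact: ht.
Qed.
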